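(* Let $f=(f_1,\dots,f_P)^\top:\mathbb{R}^N\to\mathbb{R}^P$ and $g=(g_1,\dots,g_M)^\top:\mathbb{R}^N\to\mathbb{R}^M$ satisfy: each $f_i$ is strictly convex and continuously differentiable; each $g_j$ is convex and continuously differentiable; the problem $\min\{f(x)\mid x\in\mathbb{X}\}$ with $\mathbb{X}:=\{x\mid g_j(x)\le 0,\ j=1,\dots,M\}$ is bounded; and Slater's condition holds. Let $\mathcal{P}$ be its upper image. Let $\tilde{\mathcal{P}}\subseteq\mathbb{R}^P$ be a closed and convex upper set and let $\epsilon:\mathcal{W}\to\mathbb{R}_+$ be constant, $\epsilon(w)\equiv\epsilon_0>0$. Then $\tilde{\mathcal{P}}$ is an $\epsilon(\cdot)$-inner approximation of $\mathcal{P}$ if and only if $\tilde{\mathcal{P}}\subseteq\mathcal{P}\subseteq\tilde{\mathcal{P}}-\epsilon_0\mathbf{1}$.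
   Context: $\mathcal{W}:=\{w\in\mathbb{R}^P_+\mid\mathbf{1}^\top w=1\}$, $\mathbf{1}=(1,\dots,1)^\top\in\mathbb{R}^P$. Bounded: there is $y$ with $f(x)\in y+\mathbb{R}^P_+$ for all $x\in\mathbb{X}$. Slater's condition: some $\bar x$ has $g_j(\bar x)<0$ for all $j$. A weak minimizer is $x^*\in\mathbb{X}$ with no $x\in\mathbb{X}$ satisfying $f(x^* )-f(x)\in\mathbb{R}^P_{++}$; with $\mathcal{X}$ the set of weak minimizers, the upper image is $\mathcal{P}:=\operatorname{cl}(f[\mathcal{X}]+\mathbb{R}^P_+)$. An upper set is a set $A$ with $A+\mathbb{R}^P_+= A$. For $w\in\mathcal{W}$ let $G(w):=\{y\in\mathbb{R}^P\mid w^\top y\ge 0\}$. Given $\epsilon:\mathcal{W}\to\mathbb{R}_+$, a set $\tilde{\mathcal{P}}\subseteq\mathbb{R}^P$ is an $\epsilon(\cdot)$-inner approximation (of $\mathcal{P}$) if $\tilde{\mathcal{P}}\subseteq\mathcal{P}\subseteq\bigcap_{w\in\mathcal{W}}\operatorname{cl}\left[\tilde{\mathcal{P}}-\epsilon(w)\mathbf{1}+G(w)\right]$. *)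

(* Defs.v *)
From HB Require Import structures.
From mathcomp Require Import all_boot all_order all_algebra.
From mathcomp Require Import all_classical all_reals all_analysis.
Set Implicit Arguments. Unset Strict Implicit. Unset Printing Implicit Defensive.
Import Order.TTheory GRing.Theory Num.Theory.
Import numFieldNormedType.Exports.
Local Open Scope classical_set_scope.
Local Open Scope ring_scope.

Section Defs.
Variable R : realType.

Definition convex_fun (N : nat) (h : 'rV[R]_N -> R) : Prop :=
  forall (x y : 'rV[R]_N) (t : R), 0 <= t <= 1 ->
    h (t *: x + (1 - t) *: y) <= t * h x + (1 - t) * h y.

Definition strictly_convex_fun (N : nat) (h : 'rV[R]_N -> R) : Prop :=
  forall (x y : 'rV[R]_N) (t : R), x != y -> 0 < t < 1 ->
    h (t *: x + (1 - t) *: y) < t * h x + (1 - t) * h y.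

(* continuously differentiable on all of R^N: differentiable everywhere and
   the derivative x |-> 'd h x is continuous (tested on every direction v;
   in finite dimension this is continuity in operator norm) *)
Definition C1_fun (N : nat) (h : 'rV[R]_N -> R) : Prop :=
  (forall x, differentiable h x) /\
  (forall v : 'rV[R]_N, continuous (fun x => ('d h x : 'rV[R]_N -> R) v)).

Definition feasible (N M : nat) (g : 'I_M -> 'rV[R]_N -> R) : set 'rV[R]_N :=
  [set x | forall j, g j x <= 0].

Definition fvec (N P : nat) (f : 'I_P -> 'rV[R]_N -> R) (x : 'rV[R]_N)
  : 'rV[R]_P := \row_i f i x.

Definition orthant (P : nat) : set 'rV[R]_P := [set r | forall i, 0 <= r ord0 i].

Definition bounded_problem (N M P : nat) (f : 'I_P -> 'rV[R]_N -> R)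
    (g : 'I_M -> 'rV[R]_N -> R) : Prop :=
  exists (y : 'rV[R]_P), forall x, feasible g x -> orthant (fvec f x - y).

Definition slater (N M : nat) (g : 'I_M -> 'rV[R]_N -> R) : Prop :=
  exists (xb : 'rV[R]_N), forall j, g j xb < 0.

Definition weak_minimizer (N M P : nat) (f : 'I_P -> 'rV[R]_N -> R)
    (g : 'I_M -> 'rV[R]_N -> R) (xs : 'rV[R]_N) : Prop :=
  feasible g xs /\
  ~ (exists x, feasible g x /\ forall i, 0 < (fvec f xs - fvec f x) ord0 i).

Definition msum (P : nat) (A B : set 'rV[R]_P) : set 'rV[R]_P :=
  [set z | exists a, A a /\ exists b, B b /\ z = a + b].

Definition upper_image (N M P : nat) (f : 'I_P -> 'rV[R]_N -> R)
    (g : 'I_M -> 'rV[R]_N -> R) : set 'rV[R]_P :=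
  closure (msum (fvec f @` weak_minimizer f g) (@orthant P)).

Definition upper_set (P : nat) (A : set 'rV[R]_P) : Prop :=
  msum A (@orthant P) = A.

Definition cvx_set (P : nat) (A : set 'rV[R]_P) : Prop :=
  forall x y t, A x -> A y -> 0 <= t <= 1 -> A (t *: x + (1 - t) *: y).

Definition Wset (P : nat) : set 'rV[R]_P :=
  [set w | orthant w /\ \sum_i w ord0 i = 1].

Definition Ghalf (P : nat) (w : 'rV[R]_P) : set 'rV[R]_P :=
  [set y | 0 <= \sum_i w ord0 i * y ord0 i].

Definition ones (P : nat) : 'rV[R]_P := const_mx 1.

Definition shift_ones (P : nat) (A : set 'rV[R]_P) (c : R) : set 'rV[R]_P :=
  [set a - c *: ones P | a in A].

Definition inner_approx (P : nat) (Pt Pu : set 'rV[R]_P)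
    (eps : 'rV[R]_P -> R) : Prop :=
  Pt `<=` Pu /\
  Pu `<=` \bigcap_(w in @Wset P) closure (msum (shift_ones Pt (eps w)) (Ghalf w)).

End Defs.

(* Main.v *)
Require Import Defs.
From HB Require Import structures.
From mathcomp Require Import all_boot all_order all_algebra.
From mathcomp Require Import all_classical all_reals all_analysis.
Import Order.TTheory GRing.Theory Num.Theory.
Import numFieldNormedType.Exports.
Local Open Scope classical_set_scope.
Local Open Scope ring_scope.
Set Implicit Arguments. Unset Strict Implicit.
From mathcomp Require Import ring lra.

Definition dot (R : realType) P (w x : 'rV[R]_P) := \sum_i w ord0 i * x ord0 i.

Lemma dotD (R : realType) P (w x y : 'rV[R]_P) : dot w (x + y) = dot w x + dot w y.
Proof. by rewrite /dot -big_split; apply: eq_bigr => i _; rewrite mxE mulrDr. Qed.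

Lemma dotB (R : realType) P (w x y : 'rV[R]_P) : dot w (x - y) = dot w x - dot w y.
Proof. by rewrite /dot -sumrB; apply: eq_bigr => i _; rewrite !mxE mulrBr. Qed.

Lemma dotZl (R : realType) P (k : R) (w x : 'rV[R]_P) : dot (k *: w) x = k * dot w x.
Proof. by rewrite /dot mulr_sumr; apply: eq_bigr => i _; rewrite mxE mulrA. Qed.

Lemma dot_ones (R : realType) P (e : R) (w : 'rV[R]_P) :
  dot w (e *: @ones R P) = e * \sum_i w ord0 i.
Proof. by rewrite /dot mulr_sumr; apply: eq_bigr => i _; rewrite !mxE mulr1 mulrC. Qed.

Lemma cont_sum (R : realType) (T : topologicalType) (I : Type) (r : seq I)
  (F : I -> T -> R) : (forall i, continuous (F i)) ->
  continuous (fun x => \sum_(i <- r) F i x).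
Proof.
move=> HF; elim: r => [|i r IH].
  under eq_fun do rewrite big_nil. exact: cst_continuous.
under eq_fun do rewrite big_cons.
by move=> x; apply: continuousD; [exact: HF | exact: IH].
Qed.

Lemma dot_cont (R : realType) P (w : 'rV[R]_P) : continuous (dot w).
Proof.
apply: cont_sum => i x; apply: continuousM; first exact: cst_continuous.
exact: coord_continuous.
Qed.

Lemma sep (R : realType) P (A : set 'rV[R]_P) (a0 z : 'rV[R]_P) :
  closed A -> cvx_set A -> upper_set A -> A a0 -> ~ A z ->
  exists (v c : 'rV[R]_P), (forall i, 0 <= v ord0 i) /\ 0 < \sum_i v ord0 i /\
    dot v z < dot v c /\ forall a, A a -> dot v c <= dot v a.
Proof.
move=> Acl Acvx Aup Aa0 Anz.
pose D (a : 'rV[R]_P) := \sum_i (a ord0 i - z ord0 i) ^+ 2.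
have Dcont : continuous D.
  apply: cont_sum => i x.
  have h : {for x, continuous (fun a : 'rV[R]_P => a ord0 i - z ord0 i)}.
    by apply: continuousB; [exact: coord_continuous| exact: cst_continuous].
  exact: (continuousM h h).
have D0 a : 0 <= D a by apply: sumr_ge0 => i _; exact: sqr_ge0.
pose S := A `&` [set a | D a <= D a0].
have S0 : S !=set0 by exists a0; split => //=.
pose K := D a0 + 1.
have Scpt : compact S.
  have Bc := @rV_compact _ P (fun i => `[z ord0 i - K, z ord0 i + K]%classic)
    (fun i => @segment_compact _ _ _).
  apply: (subclosed_compact _ Bc).
    apply: closedI => //; have := (@preimage_closed _ _ D [set x | x <= D a0] _ (@closed_le _ (D a0))); apply.
    by move=> x _; exact: Dcont.
  move=> a [_ /= Ha] i /=; rewrite in_itv /=.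
  have : (a ord0 i - z ord0 i) ^+ 2 <= D a0.
    apply: le_trans Ha; rewrite /D (bigD1 i) //= lerDl.
    by apply: sumr_ge0 => j _; exact: sqr_ge0.
  have := D0 a0; rewrite /K; set x := a ord0 i - z ord0 i => h1 h2.
  apply/andP; split; rewrite -/x.
  - have : - (D a0 + 1) <= x by nra.
    rewrite /x; lra.
  - have : x <= D a0 + 1 by nra.
    rewrite /x; lra.
have [c cS cmin] := EVT_min_rV S0 Scpt (continuous_subspaceT Dcont).
move: cS; rewrite inE => -[Ac Dc].
have cminA a : A a -> D c <= D a.
  move=> Aa; have [Daa0|] := leP (D a) (D a0).
    by apply: cmin; rewrite inE.
  by move=> /ltW; apply: le_trans.
pose v := c - z.
have var a : A a -> 0 <= \sum_i v ord0 i * (a ord0 i - c ord0 i).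
  move=> Aa; rewrite leNgt; apply/negP => hs.
  set s := - \sum_i v ord0 i * (a ord0 i - c ord0 i).
  have s0 : 0 < s by rewrite /s oppr_gt0.
  set Q := \sum_i (a ord0 i - c ord0 i) ^+ 2.
  have Q0 : 0 <= Q by apply: sumr_ge0 => j _; exact: sqr_ge0.
  pose t := s / (Q + 2 * s).
  have Qs : 0 < Q + 2 * s by lra.
  have t0 : 0 < t by rewrite /t divr_gt0.
  have tQ : t * (Q + 2 * s) = s by rewrite /t divfK // gt_eqF.
  have t1 : t < 1 by nra.
  have E : D (t *: a + (1 - t) *: c) = D c + t * (2 * - s) + t ^+ 2 * Q.
    rewrite /s /Q /D opprK mulr_sumr mulr_sumr mulr_sumr -!big_split /=.
    by apply: eq_bigr => i _; rewrite !mxE; ring.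
  have ht : 0 <= t <= 1 by rewrite (ltW t0) (ltW t1).
  have := cminA _ (Acvx _ _ t Aa Ac ht).
  rewrite E => h.
  nra.
have vge0 i : 0 <= v ord0 i.
  pose e := \row_(j < P) ((j == i)%:R : R).
  have Ae : A (c + e).
    rewrite -Aup; exists c; split => //; exists e; split => // j.
    by rewrite mxE; case: (j == i).
  have := var _ Ae.
  rewrite (bigD1 i) //= big1 ?addr0.
    by rewrite !mxE eqxx addrAC subrr add0r mulr1.
  by move=> j /negbTE ji; rewrite !mxE ji addr0 subrr mulr0.
have vne0 : ~ (forall i, v ord0 i = 0).
  move=> h; apply: Anz; suff -> : z = c by [].
  apply/rowP => j; have := h j.
  by rewrite !mxE => /eqP; rewrite subr_eq0 => /eqP ->.
exists v, c; split => //; split.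
  rewrite lt_def sumr_ge0 // andbT; apply/negP => /eqP.
  move/psumr_eq0P => h; apply: vne0 => i; apply: h => //.
split; last first.
  move=> a Aa; rewrite -subr_ge0 -dotB.
  suff -> : dot v (a - c) = \sum_i v ord0 i * (a ord0 i - c ord0 i) by exact: var.
  by apply: eq_bigr => i _; rewrite !mxE.
rewrite -subr_gt0 -dotB.
have -> : dot v (c - z) = \sum_i v ord0 i ^+ 2.
  by apply: eq_bigr => i _; rewrite /v !mxE.
rewrite lt_def sumr_ge0 ?andbT; last by move=> i _; exact: sqr_ge0.
apply/negP => /eqP /psumr_eq0P h; apply: vne0 => i.
by apply/eqP; rewrite -sqrf_eq0; apply/eqP; apply: h => // j _; exact: sqr_ge0.
Qed.

Theorem proposition4p3 (R : realType) (N M P : nat)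
  (f : 'I_P -> 'rV[R]_N -> R) (g : 'I_M -> 'rV[R]_N -> R)
  (hf_sc : forall i, strictly_convex_fun (f i))
  (hf_C1 : forall i, C1_fun (f i))
  (hg_c : forall j, convex_fun (g j))
  (hg_C1 : forall j, C1_fun (g j))
  (hbd : bounded_problem f g)
  (hsl : slater g)
  (Pt : set 'rV[R]_P)
  (hPt_closed : closed Pt) (hPt_convex : cvx_set Pt) (hPt_upper : upper_set Pt)
  (eps0 : R) (heps0 : 0 < eps0) :
  inner_approx Pt (upper_image f g) (fun _ => eps0) <->
  (Pt `<=` upper_image f g /\ upper_image f g `<=` shift_ones Pt eps0).
Proof.
split; last first.
  move=> [H1 H2]; split => // y /H2 Hy w Ww; apply: subset_closure.
  exists y; split => //; exists 0; split; last by rewrite addr0.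
  by rewrite /Ghalf /=; rewrite big1 // => i _; rewrite mxE mulr0.
move=> [H1 H2]; split => // y Hy.
have Hcl := H2 y Hy.
have [[a0 Pa0]|Pt0] := pselect (Pt !=set0); last first.
  have [[i0 _]|noi] := pselect (exists i : 'I_P, True); last first.
    have [s [[a [[xs wm _] _]] _]] := Hy setT filterT.
    by exfalso; case: (wm) => fx; apply; exists xs; split => // i; exfalso; apply: noi; exists i.
  pose w := \row_(j < P) ((j == i0)%:R : R).
  have Ww : Wset w.
    split; first by move=> j; rewrite mxE; case: (j == i0).
    rewrite (bigD1 i0) //= big1 ?addr0; first by rewrite mxE eqxx.
    by move=> j /negbTE ji; rewrite mxE ji.
  have [p [[q [[b Pb _] _]] _]] := Hcl w Ww setT filterT.
  by exfalso; apply: Pt0; exists b.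
pose z := y + eps0 *: @ones R P.
have [Pz|nPz] := pselect (Pt z).
  by exists z => //; rewrite /z addrK.
have [v [c [v0 [sv [vz vc]]]]] := sep hPt_closed hPt_convex hPt_upper Pa0 nPz.
set sig := \sum_i v ord0 i in sv.
pose w := sig^-1 *: v.
have Ww : Wset w.
  split; first by move=> j; rewrite mxE mulr_ge0 // invr_ge0 ltW.
  under eq_bigr do rewrite mxE.
  by rewrite -mulr_sumr mulVf // gt_eqF.
pose H := [set p | dot w c - eps0 <= dot w p].
have Hcl' : closed H.
  have := (@preimage_closed _ _ (dot w) [set x | dot w c - eps0 <= x] _
     (@closed_ge _ (dot w c - eps0))); apply.
  by move=> x _; exact: dot_cont.
have sub : Defs.msum (shift_ones Pt eps0) (Ghalf w) `<=` H.
  move=> p [q [[a Pa <-] [b [Gb ->]]]].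
  rewrite /H /= dotD dotB dot_ones.
  have -> : \sum_i w ord0 i = 1 by case: Ww.
  have : dot w c <= dot w a.
    by rewrite /w !dotZl; apply: ler_wpM2l; [rewrite invr_ge0 ltW | exact: vc].
  have : 0 <= dot w b := Gb.
  lra.
have := closureS sub (Hcl w Ww); rewrite -(proj1 (closure_id H) Hcl') /H /=.
have : dot w z < dot w c by rewrite /w !dotZl ltr_pM2l // invr_gt0.
rewrite /z dotD dot_ones.
have -> : \sum_i w ord0 i = 1 by case: Ww.
lra.
Qed.
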